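(* For every integer $N\ge16$ and $\rho\in[2/3,1)$ there is $C<\infty$ such that for every interval $I\subset\mathbb R$, $$\int_I\big|H_\flat(\mathbf 1_I\widehat\omega)\big|^2\,d\widehat{\dot\sigma}=\sum_{k,j:\dot z^k_j\in I}\widehat s^k_j\,\big|H_\flat(\mathbf 1_I\widehat\omega)(\dot z^k_j)\big|^2\le C\,\widehat\omega(I).$$
   Context: Cantor intervals: fix an integer $N\ge16$ and $\rho\in[2/3,1)$. Set $I^0_1=[0,1]$. Each interval $I=[a,a+N^{-k}]$ of generation $k$ has two children of generation $k+1$: the left child $I_-=[a,a+N^{-k-1}]$ and the right child $I_+=[a+N^{-k}-N^{-k-1},a+N^{-k}]$. The $2^k$ intervals of generation $k$ are denoted $I^k_j$, $1\le j\le 2^k$, numbered left to right; $\mathcal D$ is the collection of all of them. $\dot z^k_j$ is the center of $I^k_j$. The Cantor set is $\mathsf E^{(N)}=\bigcap_{k}\bigcup_{j}I^k_j$. Redistributed Cantor measure: with $\eta=1/N$, $\widehat\omega$ is the unique Borel probability measure supported on $\mathsf E^{(N)}$ such that $\widehat\omega(I^1_1)=\widehat\omega(I^1_2)=\frac12$ and for every $I\in\mathcal D$ of generation $\ge1$: if $I$ is the left child of its parent then $\widehat\omega(I_-)=\frac{1+\eta}2\widehat\omega(I)$, $\widehat\omega(I_+)=\frac{1-\eta}2\widehat\omega(I)$; if $I$ is the right child of its parent then $\widehat\omega(I_-)=\frac{1-\eta}2\widehat\omega(I)$, $\widehat\omega(I_+)=\frac{1+\eta}2\widehat\omega(I)$.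 Weights: $\widehat s^k_j=N^{-2k}/\widehat\omega(I^k_j)$; $\widehat{\dot\sigma}=\sum_{k\ge0}\sum_{j=1}^{2^k}\widehat s^k_j\,\delta_{\dot z^k_j}$. Flattened kernel: $K_\flat$ is defined first on $[N^{-1/2},N^{1/2}]$ as a smooth nonincreasing function with values in $[N^{-1/2},N^{1/2}]$ such that $K_\flat(x)=1/x$ for $N^{-1/2}\le x\le(\rho N)^{-1/2}$ and for $(\rho N)^{1/2}\le x\le N^{1/2}$, and $K_\flat(x)=1$ for $(\rho^2N)^{-1/2}\le x\le(\rho^2N)^{1/2}$; then extended to $(0,\infty)$ by $K_\flat(x)=N^{-k}K_\flat(N^{-k}x)$ for $x\in[N^{k-1/2},N^{k+1/2}]$, $k\in\mathbb Z$, and to $\mathbb R\setminus\{0\}$ as an odd function. $H_\flat\mu(x)=\int K_\flat(x-y)\,d\mu(y)$. *)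

(* Defs.v *)
From Stdlib Require Import Reals Lra ClassicalEpsilon.
Open Scope R_scope.

Fixpoint fsum (n : nat) (f : nat -> R) : R :=
  match n with O => 0 | S m => fsum m f + f m end.

(* Left endpoint of I^k_{j+1} (0-based index j, 0 <= j < 2^k). *)
Fixpoint cleft (N : nat) (k j : nat) : R :=
  match k with
  | O => 0
  | S k' => cleft N k' (Nat.div2 j)
            + (if Nat.odd j then / INR N ^ k' - / INR N ^ (S k') else 0)
  end.

(* Redistributed Cantor measure of the cylinder I^k_{j+1}. *)
Fixpoint omega_cyl (N : nat) (k j : nat) : R :=
  match k with
  | O => 1
  | S O => / 2
  | S ((S _) as k1) =>
      omega_cyl N k1 (Nat.div2 j) *
      (if Bool.eqb (Nat.odd j) (Nat.odd (Nat.div2 j))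
       then (1 + / INR N) / 2 else (1 - / INR N) / 2)
  end.

Definition center (N k j : nat) : R := cleft N k j + / INR N ^ k / 2.
Definition weight (N k j : nat) : R := / INR N ^ (2 * k) / omega_cyl N k j.

Definition is_interval (I : R -> Prop) : Prop :=
  forall x y z, I x -> I z -> x <= y <= z -> I y.

Definition ind (P : Prop) : R :=
  if excluded_middle_informative P then 1 else 0.

(* classical limit of a real sequence (0 if it does not converge) *)
Definition lim (u : nat -> R) : R :=
  match excluded_middle_informative (exists l, Un_cv u l) with
  | left H => proj1_sig (constructive_indefinite_description _ H)
  | right _ => 0
  end.

Definition cyl_in (N : nat) (I : R -> Prop) (n j : nat) : Prop :=
  forall y, cleft N n j <= y <= cleft N n j + / INR N ^ n -> I y.

(* generation-n approximation of  \int 1_I f d\hat\omega  *)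
Definition omega_approx (N : nat) (I : R -> Prop) (f : R -> R) (n : nat) : R :=
  fsum (2 ^ n) (fun j => ind (cyl_in N I n j) * f (cleft N n j) * omega_cyl N n j).

Definition omega_hat (N : nat) (I : R -> Prop) : R :=
  lim (omega_approx N I (fun _ => 1)).
Definition H_flat (N : nat) (K : R -> R) (I : R -> Prop) (x : R) : R :=
  lim (omega_approx N I (fun y => K (x - y))).

(* partial sums (generations 0..K0) of  sum_{k,j : z^k_j in I} s^k_j |H_flat(1_I w)(z^k_j)|^2 *)
Definition sigma_partial (N : nat) (K : R -> R) (I : R -> Prop) (K0 : nat) : R :=
  fsum (S K0) (fun k => fsum (2 ^ k) (fun j =>
    ind (I (center N k j)) * weight N k j * (H_flat N K I (center N k j)) ^ 2)).

Definition is_flat_kernel (N : nat) (rho : R) (K : R -> R) : Prop :=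
  let n := INR N in
  let lo := / sqrt n in
  let hi := sqrt n in
  (exists D : nat -> R -> R, D O = K /\
     forall m x, lo < x < hi -> derivable_pt_lim (D m) x (D (S m) x)) /\
  (forall x y, lo <= x -> x <= y -> y <= hi -> K y <= K x) /\
  (forall x, lo <= x <= hi -> lo <= K x <= hi) /\
  (forall x, lo <= x <= / sqrt (rho * n) -> K x = / x) /\
  (forall x, sqrt (rho * n) <= x <= hi -> K x = / x) /\
  (forall x, / sqrt (rho ^ 2 * n) <= x <= sqrt (rho ^ 2 * n) -> K x = 1) /\
  (forall (k : Z) x, powerRZ n k / sqrt n <= x <= powerRZ n k * sqrt n ->
       K x = powerRZ n (- k) * K (powerRZ n (- k) * x)) /\
  (forall x, 0 < x -> K (- x) = - K x).

(* Main.v *)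
Require Import Defs.
From Stdlib Require Import Reals Lra Lia Psatz ClassicalEpsilon Classical Arith.
Require Import Defs.
Open Scope R_scope.

Lemma fsum_ext n f g : (forall i, (i < n)%nat -> f i = g i) -> fsum n f = fsum n g.
Proof. induction n; simpl; intros H; auto. rewrite IHn by (intros; apply H; lia). rewrite H by lia; auto. Qed.

Lemma fsum_le n f g : (forall i, (i < n)%nat -> f i <= g i) -> fsum n f <= fsum n g.
Proof. induction n; simpl; intros H; [lra|]. assert (f n <= g n) by (apply H; lia).
 assert (fsum n f <= fsum n g) by (apply IHn; intros; apply H; lia). lra. Qed.

Lemma fsum_nonneg n f : (forall i, (i < n)%nat -> 0 <= f i) -> 0 <= fsum n f.
Proof. intros H. replace 0 with (fsum n (fun _ => 0)). apply fsum_le; auto.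
 induction n; simpl; auto. rewrite IHn; [lra|intros; apply H; lia]. Qed.

Lemma fsum_plus n f g : fsum n (fun i => f i + g i) = fsum n f + fsum n g.
Proof. induction n; simpl; [lra|]. rewrite IHn; lra. Qed.

Lemma fsum_minus n f g : fsum n (fun i => f i - g i) = fsum n f - fsum n g.
Proof. induction n; simpl; [lra|]. rewrite IHn; lra. Qed.

Lemma fsum_scal n c f : fsum n (fun i => c * f i) = c * fsum n f.
Proof. induction n; simpl; [lra|]. rewrite IHn; lra. Qed.

Lemma fsum_app a b f : fsum (a + b) f = fsum a f + fsum b (fun i => f (a + i)%nat).
Proof. induction b; simpl. rewrite Nat.add_0_r; lra.
 rewrite Nat.add_succ_r; simpl. rewrite IHb; lra. Qed.

Lemma fsum_first n f : fsum (S n) f = f O + fsum n (fun i => f (S i)).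
Proof. induction n; simpl; [lra|]. simpl in IHn. rewrite IHn. lra. Qed.

Lemma fsum_pair a f : fsum (2 * a) f = fsum a (fun i => f (2 * i)%nat + f (2 * i + 1)%nat).
Proof. induction a. simpl; auto.
 replace (2 * S a)%nat with (S (S (2 * a))) by lia. simpl. simpl in IHa. rewrite IHa.
 replace (S (a + (a + 0)))%nat with (a + (a + 0) + 1)%nat by lia. lra. Qed.

Lemma fsum_pos_ex n f : 0 < fsum n f -> exists i, (i < n)%nat /\ 0 < f i.
Proof. induction n; simpl; intros H; [lra|].
 destruct (Rlt_le_dec 0 (f n)). exists n; split; auto.
 destruct IHn as [i [Hi Hf]]. lra. exists i; split; auto. Qed.

Lemma fsum_lt_ex n f g : fsum n f < fsum n g -> exists i, (i < n)%nat /\ f i < g i.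
Proof. intros H. destruct (fsum_pos_ex n (fun i => g i - f i)) as [i [Hi Hp]].
 rewrite fsum_minus; lra. exists i; split; auto; lra. Qed.

Definition Blk (g : nat -> R) (p q : nat) : R := fsum (2 ^ p) (fun i => g (q * 2 ^ p + i)%nat).

Lemma Blk_S g p q : Blk g (S p) q = Blk g p (2 * q) + Blk g p (2 * q + 1).
Proof. unfold Blk. rewrite Nat.pow_succ_r'. replace (2 * 2 ^ p)%nat with (2^p + 2^p)%nat by lia.
 rewrite fsum_app. f_equal; apply fsum_ext; intros i Hi; f_equal; nia. Qed.

Lemma Blk_pair g p q : Blk g (S p) q = Blk (fun i => g (2 * i)%nat + g (2 * i + 1)%nat) p q.
Proof. revert q. induction p; intros q.
 unfold Blk; simpl. replace (q * 2 + 0)%nat with (q * 1 + 0 + (q * 1 + 0 + 0))%nat by lia. replace (q*2+1)%nat with (q * 1 + 0 + (q * 1 + 0 + 0) + 1)%nat by lia. lra.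
 rewrite Blk_S. rewrite !IHp. rewrite Blk_S. auto. Qed.

Lemma Blk_le g h p q : (forall i, g i <= h i) -> Blk g p q <= Blk h p q.
Proof. intros; unfold Blk; apply fsum_le; auto. Qed.

Lemma Blk_nonneg g p q : (forall i, 0 <= g i) -> 0 <= Blk g p q.
Proof. intros; unfold Blk; apply fsum_nonneg; auto. Qed.

Lemma Blk_idx p q i : (i < 2 ^ p)%nat -> ((q * 2 ^ p + i) / 2 ^ p)%nat = q.
Proof. intros H. assert (2^p <> 0)%nat by (apply Nat.pow_nonzero; lia).
 rewrite Nat.add_comm, Nat.div_add by auto. rewrite Nat.div_small by auto. lia. Qed.

Definition hull (N m q : nat) (y : R) : Prop :=
  cleft N m q <= y <= cleft N m q + / INR N ^ m.

Lemma rN_ge (N : nat) : (16 <= N)%nat -> 16 <= INR N.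
Proof. intros H. apply le_INR in H. simpl in H. lra. Qed.

Lemma pinv_pos N m : (16 <= N)%nat -> 0 < / INR N ^ m.
Proof. intros H. apply Rinv_0_lt_compat, pow_lt. pose proof (rN_ge N H); lra. Qed.

Lemma pinv_S N m : (16 <= N)%nat -> / INR N ^ S m = / INR N ^ m / INR N.
Proof. intros H. pose proof (rN_ge N H). simpl. field. split; [|lra]. apply pow_nonzero; lra. Qed.

Lemma cleft_S N k x : cleft N (S k) x = cleft N k (Nat.div2 x) +
   (if Nat.odd x then / INR N ^ k - / INR N ^ S k else 0).
Proof. reflexivity. Qed.

Lemma hull_child N k x y : (16 <= N)%nat -> hull N (S k) x y -> hull N k (Nat.div2 x) y.
Proof. intros HN. unfold hull. rewrite cleft_S. rewrite pinv_S by auto.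
 pose proof (rN_ge N HN). pose proof (pinv_pos N k HN).
 assert (/ INR N ^ k / INR N <= / INR N ^ k / 16).
 { unfold Rdiv. apply Rmult_le_compat_l; [lra|]. apply Rinv_le_contravar; lra. }
 assert (0 < / INR N ^ k / INR N) by (apply Rdiv_lt_0_compat; lra).
 destruct (Nat.odd x); lra. Qed.

Lemma desc_hull N p m x y : (16 <= N)%nat -> hull N (m + p) x y -> hull N m (x / 2 ^ p) y.
Proof. intros HN. revert x. induction p; intros x H.
 rewrite Nat.pow_0_r, Nat.div_1_r. rewrite Nat.add_0_r in H; auto.
 rewrite Nat.add_succ_r in H. apply hull_child in H; auto. apply IHp in H.
 rewrite Nat.div2_div, Nat.Div0.div_div in H. rewrite Nat.pow_succ_r'. exact H. Qed.

Lemma blk_hull N p m q i y : (16 <= N)%nat -> (i < 2 ^ p)%nat ->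
  hull N (m + p) (q * 2 ^ p + i) y -> hull N m q y.
Proof. intros HN Hi H. apply desc_hull in H; auto. rewrite Blk_idx in H; auto. Qed.

Lemma cleft_in_hull N m x : (16 <= N)%nat -> hull N m x (cleft N m x).
Proof. intros HN. unfold hull. pose proof (pinv_pos N m HN). lra. Qed.

Lemma center_in_hull N m x : (16 <= N)%nat -> hull N m x (center N m x).
Proof. intros HN. unfold hull, center. pose proof (pinv_pos N m HN). lra. Qed.

Lemma cleft_2i N k i : cleft N (S k) (2 * i) = cleft N k i.
Proof. rewrite cleft_S, Nat.div2_double, Nat.odd_even. lra. Qed.

Lemma cleft_2i1 N k i : cleft N (S k) (2 * i + 1) = cleft N k i + (/ INR N ^ k - / INR N ^ S k).
Proof. rewrite cleft_S, Nat.div2_odd', Nat.odd_odd. auto. Qed.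

Lemma child_order N k i x y : (16 <= N)%nat -> hull N (S k) (2 * i) x -> hull N (S k) (2 * i + 1) y -> x < y.
Proof. intros HN. unfold hull. rewrite cleft_2i, cleft_2i1, !pinv_S by auto.
 pose proof (rN_ge N HN). pose proof (pinv_pos N k HN).
 assert (/ INR N ^ k / INR N <= / INR N ^ k / 16).
 { unfold Rdiv. apply Rmult_le_compat_l; [lra|]. apply Rinv_le_contravar; lra. }
 lra. Qed.

Definition fac (N k p : nat) (b : bool) : R :=
  match k with O => / 2 | S _ => if Bool.eqb b (Nat.odd p) then (1 + / INR N) / 2 else (1 - / INR N) / 2 end.

Lemma om_S N k x : omega_cyl N (S k) x = omega_cyl N k (Nat.div2 x) * fac N k (Nat.div2 x) (Nat.odd x).
Proof. destruct k; simpl; [lra|]. reflexivity. Qed.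

Lemma fac_bounds N k p b : (16 <= N)%nat -> 15/32 <= fac N k p b <= 17/32.
Proof. intros HN. pose proof (rN_ge N HN). assert (0 < / INR N <= /16).
 split. apply Rinv_0_lt_compat; lra. apply Rinv_le_contravar; lra.
 destruct k; simpl; [lra|]. destruct (Bool.eqb b (Nat.odd p)); lra. Qed.

Lemma fac_sum N k p : fac N k p false + fac N k p true = 1.
Proof. destruct k; simpl; [lra|]. destruct (Nat.odd p); simpl; lra. Qed.

Lemma om_pos N k x : (16 <= N)%nat -> 0 < omega_cyl N k x.
Proof. intros HN. revert x; induction k; intros x. simpl; lra.
 rewrite om_S. pose proof (fac_bounds N k (Nat.div2 x) (Nat.odd x) HN).
 specialize (IHk (Nat.div2 x)). nra. Qed.

Lemma om_2i N k i : omega_cyl N (S k) (2 * i) = omega_cyl N k i * fac N k i false.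
Proof. rewrite om_S, Nat.div2_double, Nat.odd_even; auto. Qed.
Lemma om_2i1 N k i : omega_cyl N (S k) (2 * i + 1) = omega_cyl N k i * fac N k i true.
Proof. rewrite om_S, Nat.div2_odd', Nat.odd_odd; auto. Qed.

Lemma om_children N k i : omega_cyl N (S k) (2 * i) + omega_cyl N (S k) (2 * i + 1) = omega_cyl N k i.
Proof. rewrite om_2i, om_2i1. pose proof (fac_sum N k i). nra. Qed.

Lemma om_child_bounds N k x : (16 <= N)%nat ->
  15/32 * omega_cyl N k (Nat.div2 x) <= omega_cyl N (S k) x <= 17/32 * omega_cyl N k (Nat.div2 x).
Proof. intros HN. rewrite om_S. pose proof (fac_bounds N k (Nat.div2 x) (Nat.odd x) HN).
 pose proof (om_pos N k (Nat.div2 x) HN). nra. Qed.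

Lemma om_grand_left N m q : (16 <= N)%nat ->
  INR N ^ S m * (omega_cyl N (S (S m)) (2 * (2 * q)) - omega_cyl N (S (S m)) (2 * (2 * q) + 1))
  = INR N ^ m * omega_cyl N (S m) (2 * q).
Proof. intros HN. pose proof (rN_ge N HN). rewrite (om_2i N (S m) (2*q)), (om_2i1 N (S m) (2*q)).
 unfold fac. rewrite Nat.odd_even. simpl Bool.eqb. cbv iota. change (INR N ^ S m) with (INR N * INR N ^ m). field. lra. Qed.

Lemma om_grand_right N m q : (16 <= N)%nat ->
  INR N ^ S m * (omega_cyl N (S (S m)) (2 * (2 * q + 1)) - omega_cyl N (S (S m)) (2 * (2 * q + 1) + 1))
  = - (INR N ^ m * omega_cyl N (S m) (2 * q + 1)).
Proof. intros HN. pose proof (rN_ge N HN). rewrite (om_2i N (S m) (2*q+1)), (om_2i1 N (S m) (2*q+1)).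
 unfold fac. rewrite Nat.odd_odd. simpl Bool.eqb. cbv iota. change (INR N ^ S m) with (INR N * INR N ^ m). field. lra. Qed.

Lemma ind_true (P : Prop) : P -> ind P = 1.
Proof. intros H; unfold ind; destruct (excluded_middle_informative P); tauto. Qed.
Lemma ind_false (P : Prop) : ~ P -> ind P = 0.
Proof. intros H; unfold ind; destruct (excluded_middle_informative P); tauto. Qed.
Lemma ind_bounds (P : Prop) : 0 <= ind P <= 1.
Proof. unfold ind; destruct (excluded_middle_informative P); lra. Qed.
Lemma ind_cases (P : Prop) : (P /\ ind P = 1) \/ (~ P /\ ind P = 0).
Proof. unfold ind; destruct (excluded_middle_informative P); tauto. Qed.

Lemma fsum_zero_nonneg n f : (forall i, (i < n)%nat -> 0 <= f i) -> fsum n f = 0 ->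
  forall i, (i < n)%nat -> f i = 0.
Proof. induction n; simpl; intros H H0 i Hi; [lia|].
 assert (0 <= fsum n f) by (apply fsum_nonneg; intros; apply H; lia).
 assert (0 <= f n) by (apply H; lia).
 destruct (Nat.eq_dec i n) as [->|Hne]. lra.
 apply IHn; [intros; apply H; lia| lra | lia]. Qed.

Definition gmu N (I : R -> Prop) n i := ind (cyl_in N I n i) * omega_cyl N n i.
Definition mu N I n m q := Blk (gmu N I n) (n - m) q.
Definition gphi N (I : R -> Prop) (f : R -> R) n i := ind (cyl_in N I n i) * f (cleft N n i) * omega_cyl N n i.
Definition Phi N I f n m q := Blk (gphi N I f n) (n - m) q.
Definition gom N (f : R -> R) n i := f (cleft N n i) * omega_cyl N n i.
Definition Om N f n m q := Blk (gom N f n) (n - m) q.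

Lemma Blk_rec g n m q : (m < n)%nat ->
  Blk g (n - m) q = Blk g (n - S m) (2 * q) + Blk g (n - S m) (2 * q + 1).
Proof. intros H. replace (n - m)%nat with (S (n - S m)) by lia. apply Blk_S. Qed.

Lemma W_aux N d m q : Blk (omega_cyl N (m + d)) d q = omega_cyl N m q.
Proof. revert m q; induction d; intros m q.
 unfold Blk. simpl. rewrite Nat.add_0_r. replace (q * 1 + 0)%nat with q by lia. lra.
 rewrite Blk_S. replace (m + S d)%nat with (S m + d)%nat by lia. rewrite !IHd. apply om_children. Qed.

Lemma W_eq N n m q : (m <= n)%nat -> Blk (omega_cyl N n) (n - m) q = omega_cyl N m q.
Proof. intros H. replace n with (m + (n - m))%nat at 1 by lia. apply W_aux. Qed.


Lemma gmu_bounds N I n i : (16 <= N)%nat -> 0 <= gmu N I n i <= omega_cyl N n i.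
Proof. intros HN. unfold gmu. pose proof (ind_bounds (cyl_in N I n i)). pose proof (om_pos N n i HN). nra. Qed.

Lemma mu_nonneg N I n m q : (16 <= N)%nat -> 0 <= mu N I n m q.
Proof. intros HN. apply Blk_nonneg. intros; apply gmu_bounds; auto. Qed.

Lemma mu_le_om N I n m q : (16 <= N)%nat -> (m <= n)%nat -> mu N I n m q <= omega_cyl N m q.
Proof. intros HN H. rewrite <- (W_eq N n m q H). apply Blk_le. intros; apply gmu_bounds; auto. Qed.

Lemma mu_rec N I n m q : (m < n)%nat -> mu N I n m q = mu N I n (S m) (2 * q) + mu N I n (S m) (2 * q + 1).
Proof. intros; unfold mu; apply Blk_rec; auto. Qed.

Lemma cyl_child0 N I n i : (16 <= N)%nat -> cyl_in N I n i -> cyl_in N I (S n) (2 * i).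
Proof. intros HN H y Hy. apply H. assert (hull N (S n) (2*i) y) by exact Hy.
 apply hull_child in H0; auto. rewrite Nat.div2_double in H0. exact H0. Qed.
Lemma cyl_child1 N I n i : (16 <= N)%nat -> cyl_in N I n i -> cyl_in N I (S n) (2 * i + 1).
Proof. intros HN H y Hy. apply H. assert (hull N (S n) (2*i+1) y) by exact Hy.
 apply hull_child in H0; auto. rewrite Nat.div2_odd' in H0. exact H0. Qed.

Lemma mu_mono N I n m q : (16 <= N)%nat -> (m <= n)%nat -> mu N I n m q <= mu N I (S n) m q.
Proof. intros HN H. unfold mu. replace (S n - m)%nat with (S (n - m)) by lia. rewrite Blk_pair.
 apply Blk_le. intros i. unfold gmu.
 destruct (ind_cases (cyl_in N I n i)) as [[Hc ->]|[Hc ->]].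
 - rewrite (ind_true _ (cyl_child0 N I n i HN Hc)), (ind_true _ (cyl_child1 N I n i HN Hc)).
   rewrite <- (om_children N n i). lra.
 - pose proof (gmu_bounds N I (S n) (2*i) HN). pose proof (gmu_bounds N I (S n) (2*i+1) HN).
   unfold gmu in *. lra. Qed.

Lemma blk_hull' N n m q i y : (16 <= N)%nat -> (m <= n)%nat -> (i < 2 ^ (n - m))%nat ->
  hull N n (q * 2 ^ (n - m) + i) y -> hull N m q y.
Proof. intros HN Hmn Hi H. apply (blk_hull N (n - m) m q i y HN Hi).
 replace (m + (n - m))%nat with n by lia. auto. Qed.

Lemma mu_pos_ex N I n m q : (16 <= N)%nat -> (m <= n)%nat -> 0 < mu N I n m q ->
  exists x, hull N m q x /\ I x.
Proof. intros HN Hmn H. unfold mu, Blk in H. apply fsum_pos_ex in H. destruct H as [i [Hi Hp]].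
 unfold gmu in Hp. destruct (ind_cases (cyl_in N I n (q * 2 ^ (n - m) + i))) as [[Hc _]|[_ E]].
 - exists (cleft N n (q * 2 ^ (n - m) + i)). split.
   + eapply blk_hull'; eauto. apply cleft_in_hull; auto.
   + apply Hc. pose proof (pinv_pos N n HN). lra.
 - rewrite E in Hp. lra. Qed.

Lemma mu_lt_ex N I n m q : (16 <= N)%nat -> (m <= n)%nat -> mu N I n m q < omega_cyl N m q ->
  exists y, hull N m q y /\ ~ I y.
Proof. intros HN Hmn H. rewrite <- (W_eq N n m q Hmn) in H. unfold mu, Blk in H.
 apply fsum_lt_ex in H. destruct H as [i [Hi Hp]].
 unfold gmu in Hp. destruct (ind_cases (cyl_in N I n (q * 2 ^ (n - m) + i))) as [[_ E]|[Hc _]].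
 - rewrite E in Hp. lra.
 - unfold cyl_in in Hc. apply not_all_ex_not in Hc. destruct Hc as [y Hy].
   exists y. split.
   + eapply blk_hull'; eauto. unfold hull. tauto.
   + tauto. Qed.

Lemma Phi_const N I f n m q c : (16 <= N)%nat -> (m <= n)%nat ->
  (forall y, hull N m q y -> f y = c) ->
  Phi N I f n m q = c * mu N I n m q /\ Om N f n m q = c * omega_cyl N m q.
Proof. intros HN Hmn Hf. split.
 - unfold Phi, mu, Blk. rewrite <- fsum_scal. apply fsum_ext. intros i Hi.
   unfold gphi, gmu. rewrite Hf. ring. eapply blk_hull'; eauto. apply cleft_in_hull; auto.
 - rewrite <- (W_eq N n m q Hmn). unfold Om, Blk. rewrite <- fsum_scal. apply fsum_ext. intros i Hi.
   unfold gom. rewrite Hf. ring. eapply blk_hull'; eauto. apply cleft_in_hull; auto. Qed.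

Lemma Phi_full N I f n m q : (16 <= N)%nat -> (m <= n)%nat ->
  mu N I n m q = omega_cyl N m q -> Phi N I f n m q = Om N f n m q.
Proof. intros HN Hmn H. rewrite <- (W_eq N n m q Hmn) in H. unfold mu, Blk in H.
 assert (Z : fsum (2 ^ (n - m)) (fun i => omega_cyl N n (q * 2 ^ (n - m) + i) - gmu N I n (q * 2 ^ (n - m) + i)) = 0)
   by (rewrite fsum_minus; lra).
 unfold Phi, Om, Blk. apply fsum_ext. intros i Hi.
 assert (E : omega_cyl N n (q * 2 ^ (n - m) + i) - gmu N I n (q * 2 ^ (n - m) + i) = 0).
 { apply (fsum_zero_nonneg _ _ (fun i0 (_ : (i0 < 2 ^ (n - m))%nat) => Rge_le _ _ (Rge_minus _ _ (Rle_ge _ _ (proj2 (gmu_bounds N I n (q * 2 ^ (n - m) + i0) HN))))) Z i Hi). } unfold gmu in E. unfold gphi, gom.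
 destruct (ind_cases (cyl_in N I n (q * 2 ^ (n - m) + i))) as [[_ E1]|[_ E1]]; rewrite E1 in *.
 ring. pose proof (om_pos N n (q * 2 ^ (n - m) + i) HN). lra. Qed.

Lemma sqrt16 : sqrt 16 = 4.
Proof. apply sqrt_lem_1; lra. Qed.

Lemma Kval N rho K : (16 <= N)%nat -> 2 / 3 <= rho < 1 -> is_flat_kernel N rho K ->
  forall m x, 3 / 8 * / INR N ^ m <= x <= / INR N ^ m ->
  K x = INR N ^ m /\ K (- x) = - INR N ^ m.
Proof. intros HN Hrho HK m x Hx.
 destruct HK as [_ [_ [_ [_ [_ [Hflat [Hscale Hodd]]]]]]].
 pose proof (rN_ge N HN) as Hr. set (n := INR N) in *.
 assert (Hsq : 4 <= sqrt n). { rewrite <- sqrt16. apply sqrt_le_1_alt. lra. }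
 assert (Hp : 0 < / n ^ m) by (apply pinv_pos; auto).
 assert (Hnm : 0 < n ^ m) by (apply pow_lt; lra).
 assert (Kx : K x = n ^ m).
 { rewrite (Hscale (- Z.of_nat m)%Z x).
   - rewrite Z.opp_involutive, <- pow_powerRZ. rewrite Hflat. ring.
     assert (H89 : 8/3 <= sqrt (rho ^ 2 * n)).
     { replace (8/3) with (sqrt (64/9)). apply sqrt_le_1_alt. nra. apply sqrt_lem_1; lra. }
     assert (x * n ^ m <= 1). { replace 1 with (/ n ^ m * n ^ m) by (field; lra). nra. }
     assert (3/8 <= x * n ^ m). { replace (3/8) with (3 / 8 * / n ^ m * n ^ m) by (field; lra). nra. }
     assert (/ sqrt (rho ^ 2 * n) <= 3/8).
     { replace (3/8) with (/ (8/3)) by field. apply Rinv_le_contravar; lra. }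
     rewrite (Rmult_comm (n^m) x). split; lra.
   - rewrite powerRZ_neg', <- pow_powerRZ. split.
     + assert (/ n ^ m / sqrt n <= / n ^ m / 4).
       { unfold Rdiv. apply Rmult_le_compat_l; [lra|]. apply Rinv_le_contravar; lra. }
       lra.
     + nra. }
 split; auto. rewrite Hodd; [rewrite Kx; auto|]. nra. Qed.



Lemma Phi_rec N I f n m q : (m < n)%nat ->
  Phi N I f n m q = Phi N I f n (S m) (2 * q) + Phi N I f n (S m) (2 * q + 1).
Proof. intros; unfold Phi; apply Blk_rec; auto. Qed.
Lemma Om_rec N f n m q : (m < n)%nat ->
  Om N f n m q = Om N f n (S m) (2 * q) + Om N f n (S m) (2 * q + 1).
Proof. intros; unfold Om; apply Blk_rec; auto. Qed.

Lemma small_inv N m : (16 <= N)%nat -> / INR N ^ S m <= / INR N ^ m / 16 /\ 0 < / INR N ^ S m.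
Proof. intros HN. rewrite pinv_S by auto. pose proof (rN_ge N HN). pose proof (pinv_pos N m HN).
 split. unfold Rdiv. apply Rmult_le_compat_l; [lra|]. apply Rinv_le_contravar; lra.
 apply Rdiv_lt_0_compat; lra. Qed.

Lemma hull0 N m q y : hull N (S m) (2 * q) y <-> cleft N m q <= y <= cleft N m q + / INR N ^ S m.
Proof. unfold hull. rewrite cleft_2i. tauto. Qed.
Lemma hull1 N m q y : hull N (S m) (2 * q + 1) y <->
  cleft N m q + (/ INR N ^ m - / INR N ^ S m) <= y <= cleft N m q + (/ INR N ^ m - / INR N ^ S m) + / INR N ^ S m.
Proof. unfold hull. rewrite cleft_2i1. tauto. Qed.

Lemma phi_base N rho K I n m j : (16 <= N)%nat -> 2 / 3 <= rho < 1 -> is_flat_kernel N rho K -> (m < n)%nat ->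
  Phi N I (fun y => K (center N m j - y)) n m j =
     INR N ^ m * mu N I n (S m) (2 * j) - INR N ^ m * mu N I n (S m) (2 * j + 1) /\
  Om N (fun y => K (center N m j - y)) n m j =
     INR N ^ m * omega_cyl N (S m) (2 * j) - INR N ^ m * omega_cyl N (S m) (2 * j + 1).
Proof. intros HN Hr HK Hmn. rewrite Phi_rec, Om_rec by auto.
 pose proof (small_inv N m HN). pose proof (pinv_pos N m HN).
 destruct (Phi_const N I (fun y => K (center N m j - y)) n (S m) (2 * j) (INR N ^ m) HN Hmn) as [A1 A2].
 { intros y Hy. apply hull0 in Hy. unfold center. apply (Kval N rho K HN Hr HK). lra. }
 destruct (Phi_const N I (fun y => K (center N m j - y)) n (S m) (2 * j + 1) (- INR N ^ m) HN Hmn) as [B1 B2].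
 { intros y Hy. apply hull1 in Hy. unfold center.
   replace (cleft N m j + / INR N ^ m / 2 - y) with (- (y - (cleft N m j + / INR N ^ m / 2))) by ring.
   apply (Kval N rho K HN Hr HK). lra. }
 rewrite A1, A2, B1, B2. split; ring. Qed.

Lemma phi_step0 N rho K I n m q z : (16 <= N)%nat -> 2 / 3 <= rho < 1 -> is_flat_kernel N rho K -> (m < n)%nat ->
  hull N (S m) (2 * q) z ->
  Phi N I (fun y => K (z - y)) n m q =
     Phi N I (fun y => K (z - y)) n (S m) (2 * q) - INR N ^ m * mu N I n (S m) (2 * q + 1) /\
  Om N (fun y => K (z - y)) n m q =
     Om N (fun y => K (z - y)) n (S m) (2 * q) - INR N ^ m * omega_cyl N (S m) (2 * q + 1).
Proof. intros HN Hr HK Hmn Hz. rewrite Phi_rec, Om_rec by auto. apply hull0 in Hz.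
 pose proof (small_inv N m HN). pose proof (pinv_pos N m HN).
 destruct (Phi_const N I (fun y => K (z - y)) n (S m) (2 * q + 1) (- INR N ^ m) HN Hmn) as [B1 B2].
 { intros y Hy. apply hull1 in Hy.
   replace (z - y) with (- (y - z)) by ring.
   apply (Kval N rho K HN Hr HK). lra. }
 rewrite B1, B2. split; ring. Qed.

Lemma phi_step1 N rho K I n m q z : (16 <= N)%nat -> 2 / 3 <= rho < 1 -> is_flat_kernel N rho K -> (m < n)%nat ->
  hull N (S m) (2 * q + 1) z ->
  Phi N I (fun y => K (z - y)) n m q =
     INR N ^ m * mu N I n (S m) (2 * q) + Phi N I (fun y => K (z - y)) n (S m) (2 * q + 1) /\
  Om N (fun y => K (z - y)) n m q =
     INR N ^ m * omega_cyl N (S m) (2 * q) + Om N (fun y => K (z - y)) n (S m) (2 * q + 1).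
Proof. intros HN Hr HK Hmn Hz. rewrite Phi_rec, Om_rec by auto. apply hull1 in Hz.
 pose proof (small_inv N m HN). pose proof (pinv_pos N m HN).
 destruct (Phi_const N I (fun y => K (z - y)) n (S m) (2 * q) (INR N ^ m) HN Hmn) as [A1 A2].
 { intros y Hy. apply hull0 in Hy.
   apply (Kval N rho K HN Hr HK). lra. }
 rewrite A1, A2. split; ring. Qed.

Definition Tn N m q := INR N ^ m * (omega_cyl N (S m) (2 * q) - omega_cyl N (S m) (2 * q + 1)).
Definition mup N I n m q := if Req_EM_T (mu N I n m q) (omega_cyl N m q) then 0 else mu N I n m q.
Definition dT N I n m q := if Req_EM_T (mu N I n m q) (omega_cyl N m q) then Tn N m q else 0.
Definition Bpath N I n m d j := fsum (S d) (fun t => INR N ^ (m + t) * mup N I n (m + t) (j / 2 ^ (d - t))).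

Lemma mup_nonneg N I n m q : (16 <= N)%nat -> 0 <= mup N I n m q.
Proof. intros HN; unfold mup. destruct Req_EM_T; [lra|]. apply mu_nonneg; auto. Qed.

Lemma mup_le_mu N I n m q : (16 <= N)%nat -> mup N I n m q <= mu N I n m q.
Proof. intros HN; unfold mup. destruct Req_EM_T; [|lra]. apply mu_nonneg; auto. Qed.

Lemma Bpath_nonneg N I n m d j : (16 <= N)%nat -> 0 <= Bpath N I n m d j.
Proof. intros HN. apply fsum_nonneg. intros t _. apply Rmult_le_pos.
 apply pow_le. pose proof (rN_ge N HN); lra. apply mup_nonneg; auto. Qed.

Lemma Bpath_S N I n m d j : Bpath N I n m (S d) j =
  INR N ^ m * mup N I n m (j / 2 ^ S d) + Bpath N I n (S m) d j.
Proof. unfold Bpath. rewrite fsum_first. rewrite Nat.add_0_r, Nat.sub_0_r. f_equal.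
 apply fsum_ext. intros i Hi. replace (m + S i)%nat with (S m + i)%nat by lia.
 replace (S d - S i)%nat with (d - i)%nat by lia. auto. Qed.

Lemma Tn_child0 N m q : (16 <= N)%nat -> Tn N (S m) (2 * q) = INR N ^ m * omega_cyl N (S m) (2 * q).
Proof. intros HN. unfold Tn. apply om_grand_left; auto. Qed.
Lemma Tn_child1 N m q : (16 <= N)%nat -> Tn N (S m) (2 * q + 1) = - (INR N ^ m * omega_cyl N (S m) (2 * q + 1)).
Proof. intros HN. unfold Tn. apply om_grand_right; auto. Qed.

Lemma child_bound N I f n m c B : (16 <= N)%nat -> (S m <= n)%nat ->
  (Tn N (S m) c = INR N ^ m * omega_cyl N (S m) c \/ Tn N (S m) c = - (INR N ^ m * omega_cyl N (S m) c)) ->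
  Om N f n (S m) c = Tn N (S m) c -> Rabs (Phi N I f n (S m) c - dT N I n (S m) c) <= B ->
  Rabs (Phi N I f n (S m) c) <= B + INR N ^ m * mu N I n (S m) c.
Proof. intros HN Hmn HT HO HB. unfold dT in HB. pose proof (pow_lt (INR N) m) as Hp.
 assert (0 < INR N) by (pose proof (rN_ge N HN); lra). specialize (Hp H).
 pose proof (mu_nonneg N I n (S m) c HN).
 destruct Req_EM_T as [E|E].
 - rewrite (Phi_full N I f n (S m) c HN Hmn E), HO. rewrite E.
   assert (0 <= B) by (eapply Rle_trans; [apply Rabs_pos|apply HB]).
   assert (0 <= omega_cyl N (S m) c) by (left; apply om_pos; auto).
   destruct HT as [-> | ->]; [rewrite Rabs_right | rewrite Rabs_left1]; nra.
 - rewrite Rminus_0_r in HB. nra. Qed.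

Lemma Rabs_diff_le a b : 0 <= a -> 0 <= b -> Rabs (a - b) <= a + b.
Proof. intros; unfold Rabs; destruct Rcase_abs; lra. Qed.

Lemma main_ind N rho K I n : (16 <= N)%nat -> 2 / 3 <= rho < 1 -> is_flat_kernel N rho K ->
  forall d m j, (m + d < n)%nat ->
  Om N (fun y => K (center N (m + d) j - y)) n m (j / 2 ^ d) = Tn N m (j / 2 ^ d) /\
  Rabs (Phi N I (fun y => K (center N (m + d) j - y)) n m (j / 2 ^ d) - dT N I n m (j / 2 ^ d))
    <= Bpath N I n m d j.
Proof. intros HN Hr HK. assert (Hr0 : 0 < INR N) by (pose proof (rN_ge N HN); lra).
 induction d; intros m j Hmn.
 - rewrite Nat.pow_0_r, Nat.div_1_r, Nat.add_0_r in *.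
   destruct (phi_base N rho K I n m j HN Hr HK Hmn) as [P O].
   rewrite O. split. unfold Tn; ring.
   unfold Bpath. simpl fsum. rewrite Nat.add_0_r. replace (fst (Nat.divmod j 0 0 0)) with j by (symmetry; apply (Nat.div_1_r j)).
   unfold dT, mup. pose proof (mu_rec N I n m j Hmn).
   pose proof (mu_nonneg N I n (S m) (2*j) HN). pose proof (mu_nonneg N I n (S m) (2*j+1) HN).
   pose proof (pow_lt _ m Hr0).
   destruct Req_EM_T as [E|E].
   + rewrite (Phi_full N I _ n m j HN (Nat.lt_le_incl _ _ Hmn) E), O. unfold Tn.
     replace (INR N ^ m * omega_cyl N (S m) (2 * j) - INR N ^ m * omega_cyl N (S m) (2 * j + 1) -
       INR N ^ m * (omega_cyl N (S m) (2 * j) - omega_cyl N (S m) (2 * j + 1))) with 0 by ring.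
     rewrite Rabs_R0. lra.
   + rewrite P, Rminus_0_r. rewrite <- Rmult_minus_distr_l, Rabs_mult, Rabs_right by lra.
     pose proof (Rabs_diff_le _ _ H0 H1). nra.
 - set (c := (j / 2 ^ d)%nat).
   assert (Hq : (j / 2 ^ S d)%nat = Nat.div2 c).
   { unfold c. rewrite Nat.div2_div, Nat.Div0.div_div, Nat.pow_succ_r', Nat.mul_comm. auto. }
   rewrite Hq. replace (m + S d)%nat with (S m + d)%nat in * by lia.
   destruct (IHd (S m) j Hmn) as [IO IP]. fold c in IO, IP.
   assert (Hz : hull N (S m) c (center N (S m + d) j)).
   { apply desc_hull; auto. apply center_in_hull; auto. }
   assert (Hmn' : (m < n)%nat) by lia.
   rewrite Bpath_S, Hq.
   pose proof (mup_nonneg N I n m (Nat.div2 c) HN).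
   pose proof (Bpath_nonneg N I n (S m) d j HN).
   pose proof (pow_lt _ m Hr0).
   pose proof (Nat.div2_odd c) as Hc. set (q := Nat.div2 c) in *.
   assert (Hsplit : forall (Phm : R) (sib : nat), (S m <= n)%nat ->
      Rabs (Phi N I (fun y => K (center N (S m + d) j - y)) n m q - dT N I n m q) <=
      (if Req_EM_T (mu N I n m q) (omega_cyl N m q) then 0 else
        Rabs (Phi N I (fun y => K (center N (S m + d) j - y)) n (S m) c) + INR N ^ m * mu N I n (S m) sib) ->
      mu N I n m q = mu N I n (S m) c + mu N I n (S m) sib ->
      Rabs (Phi N I (fun y => K (center N (S m + d) j - y)) n (S m) c) <= Bpath N I n (S m) d j + INR N ^ m * mu N I n (S m) c ->
      Rabs (Phi N I (fun y => K (center N (S m + d) j - y)) n m q - dT N I n m q) <=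
        INR N ^ m * mup N I n m q + Bpath N I n (S m) d j).
   { intros _ sib _ G1 G2 G3. unfold mup. destruct Req_EM_T. lra. nra. }
   destruct (Nat.odd c) eqn:Eo; simpl Nat.b2n in Hc.
   +
     assert (Hc' : c = (2 * q + 1)%nat) by lia. rewrite Hc' in Hz, IO, IP.
     destruct (phi_step1 N rho K I n m q _ HN Hr HK Hmn' Hz) as [P O].
     assert (HTo : Om N (fun y => K (center N (S m + d) j - y)) n m q = Tn N m q).
     { rewrite O, IO, Tn_child1 by auto. unfold Tn. ring. }
     split; auto.
     apply (Hsplit 0 (2 * q)%nat Hmn').
     * unfold dT. destruct Req_EM_T as [E|E].
       rewrite (Phi_full N I _ n m q HN (Nat.lt_le_incl _ _ Hmn') E), HTo. rewrite Rminus_diag, Rabs_R0; lra.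
       rewrite Rminus_0_r, P, Hc'. pose proof (mu_nonneg N I n (S m) (2*q) HN).
       rewrite Rplus_comm. eapply Rle_trans. apply Rabs_triang. rewrite Rabs_mult, (Rabs_right (INR N ^ m)) by lra.
       rewrite (Rabs_right (mu _ _ _ _ _)) by lra. lra.
     * rewrite Hc'. rewrite (mu_rec N I n m q Hmn'). ring.
     * rewrite Hc'. apply (child_bound N I _ n m _ _ HN Hmn'); auto.
       right. apply Tn_child1; auto.
   + assert (Hc' : c = (2 * q)%nat) by lia. rewrite Hc' in Hz, IO, IP.
     destruct (phi_step0 N rho K I n m q _ HN Hr HK Hmn' Hz) as [P O].
     assert (HTo : Om N (fun y => K (center N (S m + d) j - y)) n m q = Tn N m q).
     { rewrite O, IO, Tn_child0 by auto. unfold Tn. ring. }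
     split; auto.
     apply (Hsplit 0 (2 * q + 1)%nat Hmn').
     * unfold dT. destruct Req_EM_T as [E|E].
       rewrite (Phi_full N I _ n m q HN (Nat.lt_le_incl _ _ Hmn') E), HTo. rewrite Rminus_diag, Rabs_R0; lra.
       rewrite Rminus_0_r, P, Hc'. pose proof (mu_nonneg N I n (S m) (2*q+1) HN).
       unfold Rminus. eapply Rle_trans. apply Rabs_triang. rewrite Rabs_Ropp, Rabs_mult, (Rabs_right (INR N ^ m)) by lra.
       rewrite (Rabs_right (mu _ _ _ _ _)) by lra. lra.
     * rewrite Hc'. rewrite (mu_rec N I n m q Hmn'). ring.
     * rewrite Hc'. apply (child_bound N I _ n m _ _ HN Hmn'); auto.
       left. apply Tn_child0; auto.
Qed.

Lemma omega_approx_Phi N I f n : omega_approx N I f n = Phi N I f n 0 0.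
Proof. unfold omega_approx, Phi, Blk. rewrite Nat.sub_0_r. apply fsum_ext. intros i _. reflexivity. Qed.

Lemma H_bound N rho K I n k j : (16 <= N)%nat -> 2 / 3 <= rho < 1 -> is_flat_kernel N rho K ->
  (k < n)%nat -> (j < 2 ^ k)%nat ->
  Rabs (omega_approx N I (fun y => K (center N k j - y)) n) <= Bpath N I n 0 k j.
Proof. intros HN Hr HK Hkn Hj. rewrite omega_approx_Phi.
 destruct (main_ind N rho K I n HN Hr HK k 0 j Hkn) as [_ P]. simpl (0 + k)%nat in P.
 rewrite (Nat.div_small j (2 ^ k) Hj) in P.
 assert (dT N I n 0 0 = 0). { unfold dT, Tn. destruct Req_EM_T; simpl; lra. }
 rewrite H, Rminus_0_r in P. exact P. Qed.

Lemma Un_cv_ev u v l p : (forall n, (p <= n)%nat -> u n = v n) -> Un_cv v l -> Un_cv u l.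
Proof. intros H Hv eps Heps. destruct (Hv eps Heps) as [M HM]. exists (Nat.max M p).
 intros n Hn. rewrite H by lia. apply HM. lia. Qed.

Lemma Un_cv_shift u l p : Un_cv (fun n => u (n + p)%nat) l -> Un_cv u l.
Proof. intros Hv eps Heps. destruct (Hv eps Heps) as [M HM]. exists (M + p)%nat.
 intros n Hn. replace n with ((n - p) + p)%nat by lia. apply HM. lia. Qed.

Lemma Un_cv_const c : Un_cv (fun _ => c) c.
Proof. intros eps Heps. exists O. intros. unfold Rdist. rewrite Rminus_diag, Rabs_R0. lra. Qed.

Lemma Un_cv_scal c u l : Un_cv u l -> Un_cv (fun n => c * u n) (c * l).
Proof. intros H. apply (CV_mult (fun _ => c)); auto. apply Un_cv_const. Qed.

Lemma lim_eq u l : Un_cv u l -> lim u = l.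
Proof. intros H. unfold lim. destruct excluded_middle_informative as [E|E].
 - destruct (constructive_indefinite_description _ E) as [l' Hl']. simpl. eapply UL_sequence; eauto.
 - exfalso; apply E; eauto. Qed.

Lemma mu_cv N I m q : (16 <= N)%nat -> exists l, Un_cv (fun n => mu N I n m q) l.
Proof. intros HN.
 destruct (growing_cv (fun n => mu N I (n + m) m q)) as [l Hl].
 - intros n. simpl. apply mu_mono; auto; lia.
 - exists (omega_cyl N m q). intros x [n ->]. apply mu_le_om; auto; lia.
 - exists l. apply (Un_cv_shift _ _ m). exact Hl. Qed.

Lemma main_cv N rho K I : (16 <= N)%nat -> 2 / 3 <= rho < 1 -> is_flat_kernel N rho K ->
  forall d m j, exists l,
  Un_cv (fun n => Phi N I (fun y => K (center N (m + d) j - y)) n m (j / 2 ^ d)) l.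
Proof. intros HN Hr HK. induction d; intros m j.
 - rewrite Nat.pow_0_r, Nat.div_1_r, Nat.add_0_r.
   destruct (mu_cv N I (S m) (2 * j) HN) as [l1 H1]. destruct (mu_cv N I (S m) (2 * j + 1) HN) as [l2 H2].
   exists (INR N ^ m * l1 - INR N ^ m * l2).
   eapply (Un_cv_ev _ _ _ (S m)); cycle 1.
   + apply CV_minus; apply Un_cv_scal; eauto.
   + intros n Hn. apply (phi_base N rho K I n m j HN Hr HK). lia.
 - set (c := (j / 2 ^ d)%nat).
   assert (Hq : (j / 2 ^ S d)%nat = Nat.div2 c).
   { unfold c. rewrite Nat.div2_div, Nat.Div0.div_div, Nat.pow_succ_r', Nat.mul_comm. auto. }
   rewrite Hq. replace (m + S d)%nat with (S m + d)%nat by lia.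
   destruct (IHd (S m) j) as [l0 IH]. fold c in IH.
   assert (Hz : hull N (S m) c (center N (S m + d) j)).
   { apply desc_hull; auto. apply center_in_hull; auto. }
   pose proof (Nat.div2_odd c) as Hc. set (q := Nat.div2 c) in *.
   destruct (Nat.odd c) eqn:Eo; simpl Nat.b2n in Hc.
   + assert (Hc' : c = (2 * q + 1)%nat) by lia. rewrite Hc' in Hz, IH.
     destruct (mu_cv N I (S m) (2 * q) HN) as [l1 H1].
     exists (INR N ^ m * l1 + l0). eapply (Un_cv_ev _ _ _ (S m)); cycle 1.
     * apply CV_plus; [apply Un_cv_scal|]; eauto.
     * intros n Hn. apply (phi_step1 N rho K I n m q _ HN Hr HK); auto.
   + assert (Hc' : c = (2 * q)%nat) by lia. rewrite Hc' in Hz, IH.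
     destruct (mu_cv N I (S m) (2 * q + 1) HN) as [l1 H1].
     exists (l0 - INR N ^ m * l1). eapply (Un_cv_ev _ _ _ (S m)); cycle 1.
     * apply CV_minus; [|apply Un_cv_scal]; eauto.
     * intros n Hn. apply (phi_step0 N rho K I n m q _ HN Hr HK); auto.
Qed.

Lemma H_cv N rho K I k j : (16 <= N)%nat -> 2 / 3 <= rho < 1 -> is_flat_kernel N rho K ->
  (j < 2 ^ k)%nat ->
  Un_cv (fun n => omega_approx N I (fun y => K (center N k j - y)) n) (H_flat N K I (center N k j)).
Proof. intros HN Hr HK Hj. destruct (main_cv N rho K I HN Hr HK k 0 j) as [l Hl].
 simpl (0 + k)%nat in Hl. rewrite (Nat.div_small j (2 ^ k) Hj) in Hl.
 assert (Un_cv (fun n => omega_approx N I (fun y => K (center N k j - y)) n) l).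
 { refine (Un_cv_ev _ _ _ 0%nat _ Hl). intros n _. apply omega_approx_Phi. }
 unfold H_flat. replace (lim (omega_approx N I (fun y : R => K (center N k j - y)))) with l; auto.
 symmetry. apply lim_eq. exact H. Qed.

Lemma omega_hat_cv N I : (16 <= N)%nat -> Un_cv (fun n => mu N I n 0 0) (omega_hat N I).
Proof. intros HN. destruct (mu_cv N I 0 0 HN) as [l Hl].
 assert (Un_cv (omega_approx N I (fun _ => 1)) l).
 { refine (Un_cv_ev _ _ _ 0%nat _ Hl). intros n _. rewrite omega_approx_Phi. unfold Phi, mu, Blk.
   apply fsum_ext. intros i _. unfold gphi, gmu. ring. }
 unfold omega_hat. rewrite (lim_eq _ l H); auto. Qed.

Definition Bv N I n k j := Bpath N I n 0 k j.

Lemma Brec N I n k j : Bv N I n (S k) j = Bv N I n k (Nat.div2 j) + INR N ^ S k * mup N I n (S k) j.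
Proof. unfold Bv, Bpath. change (fsum (S (S k)) ?f) with (fsum (S k) f + f (S k)).
 cbv beta. rewrite Nat.sub_diag, Nat.pow_0_r, Nat.div_1_r. replace (0 + S k)%nat with (S k) by lia. f_equal.
 apply fsum_ext. intros t Ht. simpl (0 + t)%nat. f_equal. f_equal.
 replace (S k - t)%nat with (S (k - t)) by lia. rewrite Nat.pow_succ_r', Nat.div2_div, Nat.Div0.div_div. auto. Qed.

Lemma Bv_nonneg N I n k j : (16 <= N)%nat -> 0 <= Bv N I n k j.
Proof. intros; apply Bpath_nonneg; auto. Qed.

Definition Tk N I n k := fsum (2 ^ k) (fun j => weight N k j * (Bv N I n k j) ^ 2).
Definition Uk N I n k := fsum (2 ^ k) (fun j => (mup N I n k j) ^ 2 / omega_cyl N k j).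

Lemma weight_pos N k j : (16 <= N)%nat -> 0 < weight N k j.
Proof. intros HN. unfold weight. apply Rdiv_lt_0_compat. apply pinv_pos; auto. apply om_pos; auto. Qed.

Lemma weight_child N k c : (16 <= N)%nat -> weight N (S k) c <= / 8 * weight N k (Nat.div2 c).
Proof. intros HN. unfold weight. pose proof (om_child_bounds N k c HN) as [H1 H2].
 pose proof (om_pos N k (Nat.div2 c) HN). pose proof (rN_ge N HN).
 replace (2 * S k)%nat with (2 + 2 * k)%nat by lia. rewrite pow_add.
 assert (0 < INR N ^ (2 * k)) by (apply pow_lt; lra).
 rewrite Rinv_mult. unfold Rdiv.
 assert (/ INR N ^ 2 <= / 256). { apply Rinv_le_contravar. lra. simpl. nra. }
 assert (/ omega_cyl N (S k) c <= / (15/32 * omega_cyl N k (Nat.div2 c))).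
 { apply Rinv_le_contravar; nra. }
 rewrite Rinv_mult in H5.
 assert (0 < / INR N ^ (2 * k)) by (apply Rinv_0_lt_compat; auto).
 assert (0 < / omega_cyl N k (Nat.div2 c)) by (apply Rinv_0_lt_compat; auto).
 assert (0 < / INR N ^ 2) by (apply Rinv_0_lt_compat; simpl; nra).
 assert (0 <= / omega_cyl N (S k) c) by (left; apply Rinv_0_lt_compat; apply om_pos; auto).
 replace (/ (15 / 32)) with (32/15) in H5 by field.
 apply Rle_trans with (/ 256 * / INR N ^ (2 * k) * (32 / 15 * / omega_cyl N k (Nat.div2 c))).
 - apply Rmult_le_compat; try nra.
 - nra. Qed.

Lemma weight_mult N k c : (16 <= N)%nat -> weight N k c * (INR N ^ k) ^ 2 = / omega_cyl N k c.
Proof. intros HN. unfold weight. pose proof (rN_ge N HN). pose proof (om_pos N k c HN).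
 replace (2 * k)%nat with (k + k)%nat by lia. rewrite pow_add. field.
 split. lra. apply pow_nonzero; lra. Qed.

Lemma T_step N I n k : (16 <= N)%nat -> Tk N I n (S k) <= 2 * Uk N I n (S k) + / 2 * Tk N I n k.
Proof. intros HN. unfold Tk, Uk. rewrite Nat.pow_succ_r', !fsum_pair.
 rewrite <- fsum_scal, <- fsum_scal, <- fsum_plus. apply fsum_le. intros i _.
 rewrite !Brec, Nat.div2_double, Nat.div2_odd'.
 pose proof (weight_child N k (2*i) HN). pose proof (weight_child N k (2*i+1) HN).
 rewrite Nat.div2_double in H. rewrite Nat.div2_odd' in H0.
 pose proof (weight_mult N (S k) (2 * i) HN). pose proof (weight_mult N (S k) (2 * i + 1) HN).
 pose proof (weight_pos N (S k) (2*i) HN). pose proof (weight_pos N (S k) (2*i+1) HN).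
 pose proof (weight_pos N k i HN).
 set (b := Bv N I n k i) in *. set (w0 := weight N (S k) (2 * i)) in *. set (w1 := weight N (S k) (2 * i + 1)) in *.
 set (m0 := mup N I n (S k) (2 * i)). set (m1 := mup N I n (S k) (2 * i + 1)).
 set (P := INR N ^ S k) in *.
 unfold Rdiv. rewrite <- H1, <- H2.
 assert (0 <= b ^ 2) by nra.
 assert (w0 * (b + P * m0) ^ 2 <= 2 * (w0 * (P ^ 2) * m0 ^ 2) + 2 * w0 * b ^ 2).
 { assert ((b + P * m0) ^ 2 <= 2 * b ^ 2 + 2 * (P ^ 2 * m0 ^ 2)) by (pose proof (pow2_ge_0 (b - P * m0)); nra).
   apply Rmult_le_compat_l with (r := w0) in H7; [|lra]. nra. }
 assert (w1 * (b + P * m1) ^ 2 <= 2 * (w1 * (P ^ 2) * m1 ^ 2) + 2 * w1 * b ^ 2).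
 { assert ((b + P * m1) ^ 2 <= 2 * b ^ 2 + 2 * (P ^ 2 * m1 ^ 2)) by (pose proof (pow2_ge_0 (b - P * m1)); nra).
   apply Rmult_le_compat_l with (r := w1) in H7; [|lra]. nra. }
 assert (2 * w0 * b ^ 2 + 2 * w1 * b^2 <= / 2 * (weight N k i * b ^ 2)) by nra.
 nra. Qed.

Lemma Uk_nonneg N I n k : (16 <= N)%nat -> 0 <= Uk N I n k.
Proof. intros HN. apply fsum_nonneg. intros j _. unfold Rdiv. apply Rmult_le_pos; [nra| left; apply Rinv_0_lt_compat, om_pos; auto]. Qed.
Lemma Tk_nonneg N I n k : (16 <= N)%nat -> 0 <= Tk N I n k.
Proof. intros HN. apply fsum_nonneg. intros j _. pose proof (weight_pos N k j HN). nra. Qed.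

Lemma T_sum N I n K : (16 <= N)%nat ->
  fsum (S K) (Tk N I n) + Tk N I n K <= 4 * fsum (S K) (Uk N I n).
Proof. intros HN. induction K.
 - simpl. unfold Tk, Uk. simpl. unfold weight, Bv, Bpath. simpl.
   replace (0 / 1)%nat with 0%nat by reflexivity.
   pose proof (Uk_nonneg N I n 0 HN). unfold Uk in H. simpl in H.
   replace (/ 1 / 1) with 1 by field. nra.
 - change (fsum (S (S K)) (Tk N I n)) with (fsum (S K) (Tk N I n) + Tk N I n (S K)).
   change (fsum (S (S K)) (Uk N I n)) with (fsum (S K) (Uk N I n) + Uk N I n (S K)).
   pose proof (T_step N I n K HN). pose proof (Tk_nonneg N I n K HN). lra. Qed.

Definition eL N (I : R -> Prop) m q := exists x y, hull N m q x /\ hull N m q y /\ x < y /\ ~ I x /\ I y.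
Definition eR N (I : R -> Prop) m q := exists x y, hull N m q x /\ hull N m q y /\ x < y /\ I x /\ ~ I y.
Definition ee N I m q := ind (eL N I m q) + ind (eR N I m q).

Lemma ee_bounds N I m q : 0 <= ee N I m q <= 2.
Proof. unfold ee. pose proof (ind_bounds (eL N I m q)). pose proof (ind_bounds (eR N I m q)). lra. Qed.

Lemma hull_c0 N k i y : (16 <= N)%nat -> hull N (S k) (2 * i) y -> hull N k i y.
Proof. intros HN H. apply hull_child in H; auto. rewrite Nat.div2_double in H; auto. Qed.
Lemma hull_c1 N k i y : (16 <= N)%nat -> hull N (S k) (2 * i + 1) y -> hull N k i y.
Proof. intros HN H. apply hull_child in H; auto. rewrite Nat.div2_odd' in H; auto. Qed.

Lemma ind_le2 (A B C : Prop) : (A -> C) -> (B -> C) -> ~ (A /\ B) -> ind A + ind B <= ind C.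
Proof. intros HA HB HAB. destruct (ind_cases A) as [[a ->]|[a ->]]; destruct (ind_cases B) as [[b ->]|[b ->]].
 - tauto.
 - rewrite ind_true; auto; lra.
 - rewrite ind_true; auto; lra.
 - pose proof (ind_bounds C); lra. Qed.

Lemma ee_child N I k i : (16 <= N)%nat -> is_interval I ->
  ee N I (S k) (2 * i) + ee N I (S k) (2 * i + 1) <= ee N I k i.
Proof. intros HN HI. unfold ee.
 assert (ind (eL N I (S k) (2 * i)) + ind (eL N I (S k) (2 * i + 1)) <= ind (eL N I k i)).
 { apply ind_le2.
   - intros [x [y [? [? ?]]]]. exists x, y. repeat split; try tauto; apply (hull_c0 N k i); tauto.
   - intros [x [y [? [? ?]]]]. exists x, y. repeat split; try tauto; apply (hull_c1 N k i); tauto.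
   - intros [[x0 [y0 [A0 [B0 [C0 [D0 E0]]]]]] [x1 [y1 [A1 [B1 [C1 [D1 E1]]]]]]].
     apply D1. apply (HI y0 x1 y1); auto. split; [|lra]. left. apply (child_order N k i); auto. }
 assert (ind (eR N I (S k) (2 * i)) + ind (eR N I (S k) (2 * i + 1)) <= ind (eR N I k i)).
 { apply ind_le2.
   - intros [x [y [? [? ?]]]]. exists x, y. repeat split; try tauto; apply (hull_c0 N k i); tauto.
   - intros [x [y [? [? ?]]]]. exists x, y. repeat split; try tauto; apply (hull_c1 N k i); tauto.
   - intros [[x0 [y0 [A0 [B0 [C0 [D0 E0]]]]]] [x1 [y1 [A1 [B1 [C1 [D1 E1]]]]]]].
     apply E0. apply (HI x0 y0 x1); auto. split; [lra|]. left. apply (child_order N k i); auto. }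
 lra. Qed.

Lemma ee_pos N I n k j : (16 <= N)%nat -> (k <= n)%nat -> mup N I n k j <> 0 -> 1 <= ee N I k j.
Proof. intros HN Hkn H. unfold mup in H. destruct Req_EM_T as [E|E]; [lra|].
 pose proof (mu_nonneg N I n k j HN). pose proof (mu_le_om N I n k j HN Hkn).
 destruct (mu_pos_ex N I n k j HN Hkn) as [x [Hx Ix]]. lra.
 destruct (mu_lt_ex N I n k j HN Hkn) as [y [Hy Iy]]. lra.
 unfold ee. pose proof (ind_bounds (eL N I k j)). pose proof (ind_bounds (eR N I k j)).
 destruct (Rtotal_order x y) as [Hxy|[Hxy|Hxy]].
 - rewrite (ind_true (eR N I k j)). lra. exists x, y. tauto.
 - subst; tauto.
 - rewrite (ind_true (eL N I k j)). lra. exists y, x. tauto. Qed.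

Definition Psi (t : R) : R := if Rle_dec t 1 then 32 / 15 * t else 32 / 15 + 1 + 17 / 15 * (1 - / t).

Lemma Psi_bounds t : 0 < t -> 0 <= Psi t <= 64 / 15.
Proof. intros Ht. unfold Psi. destruct Rle_dec. lra.
 assert (0 < / t <= 1). { split. apply Rinv_0_lt_compat; lra. rewrite <- Rinv_1. apply Rinv_le_contravar; lra. }
 lra. Qed.

Lemma Psi_mono s t : 0 < s -> s <= t -> Psi s <= Psi t.
Proof. intros Hs Hst. unfold Psi. destruct (Rle_dec s 1); destruct (Rle_dec t 1).
 - lra.
 - assert (/ t <= 1). { rewrite <- Rinv_1. apply Rinv_le_contravar; lra. } lra.
 - lra.
 - assert (/ t <= / s) by (apply Rinv_le_contravar; lra). lra. Qed.

Lemma Psi_key t F : 0 < t -> 0 <= F -> F <= t -> F <= / t -> F + Psi (17 / 32 * t) <= Psi t.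
Proof. intros Ht HF1 HF2 HF3. unfold Psi. destruct (Rle_dec (17/32*t) 1); destruct (Rle_dec t 1).
 - lra.
 - assert (/ t <= 1). { rewrite <- Rinv_1. apply Rinv_le_contravar; lra. }
   assert (0 <= 1 - / t) by lra. nra.
 - lra.
 - assert (/ (17 / 32 * t) = 32 / 17 * / t) by (field; lra). rewrite H.
   assert (0 < / t) by (apply Rinv_0_lt_compat; lra). lra. Qed.

Lemma node_pot N I n k j M : (16 <= N)%nat -> is_interval I -> (k <= n)%nat -> 0 < M ->
  mu N I n k j <= M ->
  (mup N I n k j) ^ 2 / omega_cyl N k j
  + ee N I (S k) (2 * j) * M * Psi (omega_cyl N (S k) (2 * j) / M)
  + ee N I (S k) (2 * j + 1) * M * Psi (omega_cyl N (S k) (2 * j + 1) / M)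
  <= ee N I k j * M * Psi (omega_cyl N k j / M).
Proof. intros HN HI Hkn HM Hmu.
 set (w := omega_cyl N k j). assert (Hw : 0 < w) by (apply om_pos; auto).
 set (t := w / M). assert (Ht : 0 < t) by (unfold t; apply Rdiv_lt_0_compat; lra).
 pose proof (om_child_bounds N k (2 * j) HN) as [_ C0]. pose proof (om_child_bounds N k (2 * j + 1) HN) as [_ C1].
 rewrite Nat.div2_double in C0. rewrite Nat.div2_odd' in C1. fold w in C0, C1.
 assert (P0 : Psi (omega_cyl N (S k) (2 * j) / M) <= Psi (17/32 * t)).
 { apply Psi_mono. apply Rdiv_lt_0_compat; [apply om_pos; auto|lra]. unfold t.
   assert (0 < / M) by (apply Rinv_0_lt_compat; lra). unfold Rdiv. nra. }
 assert (P1 : Psi (omega_cyl N (S k) (2 * j + 1) / M) <= Psi (17/32 * t)).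
 { apply Psi_mono. apply Rdiv_lt_0_compat; [apply om_pos; auto|lra]. unfold t.
   assert (0 < / M) by (apply Rinv_0_lt_compat; lra). unfold Rdiv. nra. }
 pose proof (ee_child N I k j HN HI) as Ech.
 pose proof (ee_bounds N I (S k) (2 * j)). pose proof (ee_bounds N I (S k) (2 * j + 1)).
 pose proof (Psi_bounds (omega_cyl N (S k) (2 * j) / M) ltac:(apply Rdiv_lt_0_compat; [apply om_pos; auto|lra])).
 pose proof (Psi_bounds (omega_cyl N (S k) (2 * j + 1) / M) ltac:(apply Rdiv_lt_0_compat; [apply om_pos; auto|lra])).
 pose proof (Psi_bounds (17/32 * t) ltac:(nra)).
 set (F := (mup N I n k j) ^ 2 / w / M).
 assert (HF : 0 <= F /\ F <= t /\ F <= / t).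
 { pose proof (mup_nonneg N I n k j HN). pose proof (mup_le_mu N I n k j HN).
   pose proof (mu_le_om N I n k j HN Hkn). fold w in H6.
   unfold F, t. split; [|split].
   - unfold Rdiv. apply Rmult_le_pos; [apply Rmult_le_pos; [nra|]|]; left; apply Rinv_0_lt_compat; lra.
   - unfold Rdiv. apply Rmult_le_compat_r; [left; apply Rinv_0_lt_compat; lra|].
     apply (Rmult_le_reg_r w); [lra|]. rewrite Rmult_assoc, Rinv_l by lra. nra.
   - rewrite Rinv_div. unfold Rdiv. apply (Rmult_le_reg_r (w * M)); [nra|].
     replace (mup N I n k j ^ 2 * / w * / M * (w * M)) with (mup N I n k j ^ 2) by (field; lra).
     replace (M * / w * (w * M)) with (M * M) by (field; lra). nra. }
 destruct HF as [F0 [F1 F2]].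
 pose proof (Psi_key t F Ht F0 F1 F2).
 assert (EQ : (mup N I n k j) ^ 2 / w = M * F) by (unfold F; field; lra). rewrite EQ.
 set (e0 := ee N I (S k) (2 * j)) in *. set (e1 := ee N I (S k) (2 * j + 1)) in *.
 set (Q0 := Psi (omega_cyl N (S k) (2 * j) / M)) in *. set (Q1 := Psi (omega_cyl N (S k) (2 * j + 1) / M)) in *.
 set (R := Psi (17/32 * t)) in *.
 assert (e0 * M * Q0 + e1 * M * Q1 <= (e0 + e1) * M * R).
 { assert (e0 * Q0 <= e0 * R) by (apply Rmult_le_compat_l; lra).
   assert (e1 * Q1 <= e1 * R) by (apply Rmult_le_compat_l; lra). nra. }
 destruct (Req_dec (mup N I n k j) 0) as [Z|Z].
 - assert (FZ : F = 0) by (unfold F; rewrite Z; unfold Rdiv; ring). rewrite FZ.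
   assert (0 <= (ee N I k j - (e0 + e1)) * (M * R)) by (apply Rmult_le_pos; nra).
   assert (0 <= ee N I k j * M * (Psi t - R)) by (apply Rmult_le_pos; nra).
   nra.
 - pose proof (ee_pos N I n k j HN Hkn Z).
   assert (0 <= (ee N I k j - 1) * (M * F)) by (apply Rmult_le_pos; nra).
   assert (0 <= (ee N I k j - (e0 + e1)) * (M * R)) by (apply Rmult_le_pos; nra).
   assert (0 <= ee N I k j * M * (Psi t - (F + R))) by (apply Rmult_le_pos; nra).
   nra. Qed.

Lemma mu_le_root N I n : (16 <= N)%nat -> forall k j, (k <= n)%nat -> (j < 2 ^ k)%nat -> mu N I n k j <= mu N I n 0 0.
Proof. intros HN. induction k; intros j Hkn Hj.
 - simpl in Hj. replace j with 0%nat by lia. lra.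
 - assert (Hd : (Nat.div2 j < 2 ^ k)%nat).
   { rewrite Nat.div2_div. apply Nat.Div0.div_lt_upper_bound. rewrite Nat.pow_succ_r' in Hj. lia. }
   specialize (IHk (Nat.div2 j) ltac:(lia) Hd).
   pose proof (mu_rec N I n k (Nat.div2 j) ltac:(lia)).
   pose proof (mu_nonneg N I n (S k) (2 * Nat.div2 j) HN). pose proof (mu_nonneg N I n (S k) (2 * Nat.div2 j + 1) HN).
   pose proof (Nat.div2_odd j) as Hj2. destruct (Nat.odd j); simpl Nat.b2n in Hj2.
   + rewrite Hj2 at 1. lra.
   + rewrite Hj2 at 1. rewrite Nat.add_0_r. lra. Qed.

Definition Vk N I M k := fsum (2 ^ k) (fun j => ee N I k j * M * Psi (omega_cyl N k j / M)).

Lemma UV_step N I n k M : (16 <= N)%nat -> is_interval I -> (k <= n)%nat -> 0 < M -> mu N I n 0 0 <= M ->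
  Uk N I n k + Vk N I M (S k) <= Vk N I M k.
Proof. intros HN HI Hkn HM HMu. unfold Uk, Vk. rewrite Nat.pow_succ_r', fsum_pair.
 rewrite <- fsum_plus. apply fsum_le. intros j Hj.
 pose proof (node_pot N I n k j M HN HI Hkn HM ltac:(pose proof (mu_le_root N I n HN k j Hkn Hj); lra)). lra. Qed.

Lemma Vk_nonneg N I M k : (16 <= N)%nat -> 0 < M -> 0 <= Vk N I M k.
Proof. intros HN HM. apply fsum_nonneg. intros j _. pose proof (ee_bounds N I k j).
 pose proof (Psi_bounds (omega_cyl N k j / M) ltac:(apply Rdiv_lt_0_compat; [apply om_pos; auto|lra])).
 apply Rmult_le_pos; [apply Rmult_le_pos|]; lra. Qed.

Lemma U_sum_M N I n K M : (16 <= N)%nat -> is_interval I -> (K <= n)%nat -> 0 < M -> mu N I n 0 0 <= M ->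
  fsum (S K) (Uk N I n) <= 128 / 15 * M.
Proof. intros HN HI HKn HM HMu.
 assert (forall K', (K' <= n)%nat -> fsum (S K') (Uk N I n) + Vk N I M (S K') <= Vk N I M 0).
 { induction K'; intros HK'.
   - simpl. pose proof (UV_step N I n 0 M HN HI HK' HM HMu). lra.
   - change (fsum (S (S K')) (Uk N I n)) with (fsum (S K') (Uk N I n) + Uk N I n (S K')).
     pose proof (UV_step N I n (S K') M HN HI HK' HM HMu). pose proof (IHK' ltac:(lia)). lra. }
 pose proof (H K HKn). pose proof (Vk_nonneg N I M (S K) HN HM).
 assert (Vk N I M 0 <= 128 / 15 * M).
 { unfold Vk. simpl. pose proof (ee_bounds N I 0 0).
   pose proof (Psi_bounds (1 / M) ltac:(apply Rdiv_lt_0_compat; lra)).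
   assert (ee N I 0 0 * M * Psi (1 / M) <= 2 * M * (64/15)).
   { apply Rmult_le_compat; try nra. }
   lra. }
 lra. Qed.

Lemma U_sum N I n K : (16 <= N)%nat -> is_interval I -> (K <= n)%nat ->
  fsum (S K) (Uk N I n) <= 128 / 15 * mu N I n 0 0.
Proof. intros HN HI HKn. apply le_epsilon. intros eps Heps.
 pose proof (mu_nonneg N I n 0 0 HN).
 pose proof (U_sum_M N I n K (mu N I n 0 0 + eps * 15 / 128) HN HI HKn ltac:(lra) ltac:(lra)). lra. Qed.

Definition LHS N K I K0 n := fsum (S K0) (fun k => fsum (2 ^ k) (fun j =>
    ind (I (center N k j)) * weight N k j * (omega_approx N I (fun y => K (center N k j - y)) n) ^ 2)).

Lemma LHS_bound N rho K I K0 n : (16 <= N)%nat -> 2 / 3 <= rho < 1 -> is_flat_kernel N rho K ->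
  is_interval I -> (K0 < n)%nat -> LHS N K I K0 n <= 35 * mu N I n 0 0.
Proof. intros HN Hr HK HI Hn.
 apply Rle_trans with (fsum (S K0) (Tk N I n)).
 - apply fsum_le. intros k Hk. apply fsum_le. intros j Hj.
   pose proof (H_bound N rho K I n k j HN Hr HK ltac:(lia) Hj).
   pose proof (Bv_nonneg N I n k j HN). unfold Bv in H0.
   pose proof (weight_pos N k j HN). pose proof (ind_bounds (I (center N k j))).
   set (h := omega_approx N I (fun y => K (center N k j - y)) n) in *.
   assert (h ^ 2 <= (Bv N I n k j) ^ 2).
   { unfold Bv. revert H. unfold Rabs. destruct Rcase_abs; intros; nra. }
   assert (0 <= h ^ 2) by nra.
   assert (ind (I (center N k j)) * weight N k j * h ^ 2 <= 1 * weight N k j * h ^ 2).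
   { apply Rmult_le_compat_r; [lra|]. apply Rmult_le_compat_r; lra. }
   nra.
 - pose proof (T_sum N I n K0 HN). pose proof (Tk_nonneg N I n K0 HN).
   pose proof (U_sum N I n K0 HN HI ltac:(lia)). pose proof (mu_nonneg N I n 0 0 HN). lra. Qed.

Lemma fsum_cv len (f : nat -> nat -> R) g : (forall i, (i < len)%nat -> Un_cv (fun n => f n i) (g i)) ->
  Un_cv (fun n => fsum len (f n)) (fsum len g).
Proof. induction len; intros H; simpl. apply Un_cv_const.
 apply CV_plus. apply IHlen; intros; apply H; lia. apply H; lia. Qed.

Lemma Un_cv_sq u l : Un_cv u l -> Un_cv (fun n => (u n) ^ 2) (l ^ 2).
Proof. intros H. replace (l ^ 2) with (l * l) by ring.
 apply (Un_cv_ev _ (fun n => u n * u n) _ 0%nat). intros; ring. apply CV_mult; auto. Qed.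

Lemma Un_cv_shift' u l p : Un_cv u l -> Un_cv (fun n => u (n + p)%nat) l.
Proof. intros Hv eps Heps. destruct (Hv eps Heps) as [M HM]. exists M. intros n Hn. apply HM. lia. Qed.

Theorem mainTheorem7 (N : nat) (rho : R) :
  (16 <= N)%nat -> 2 / 3 <= rho < 1 ->
  forall K : R -> R, is_flat_kernel N rho K ->
  exists C : R, forall I : R -> Prop, is_interval I ->
    forall K0 : nat, sigma_partial N K I K0 <= C * omega_hat N I.
Proof. intros HN Hr K HK. exists 35. intros I HI K0.
 assert (Hc : Un_cv (LHS N K I K0) (sigma_partial N K I K0)).
 { unfold LHS, sigma_partial. apply fsum_cv. intros k Hk. apply fsum_cv. intros j Hj.
   apply Un_cv_scal. apply Un_cv_sq. apply (H_cv N rho K I k j HN Hr HK Hj). }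
 apply Rle_cv_lim with (Un := fun n => LHS N K I K0 (n + S K0)) (Vn := fun n => 35 * mu N I (n + S K0) 0 0).
 - intros n. apply (LHS_bound N rho K I K0 (n + S K0) HN Hr HK HI). lia.
 - apply Un_cv_shift'. auto.
 - apply Un_cv_scal. apply (Un_cv_shift' (fun n => mu N I n 0 0)). apply omega_hat_cv; auto. Qed.
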